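(* There exists an uncountable semigroup $(S,+)$ which is very weakly cancellative, has no idempotent element, and in which every uncountable subset of $S$ is an IP set.
   Context: For an infinite semigroup $S$ of cardinality $\kappa$: a left solution set is a set $\{x\in S: a+x=b\}$ and a right solution set is a set $\{x\in S: x+a=b\}$ for some $a,b\in S$; $S$ is very weakly cancellative if the union of fewer than $\kappa$ left solution sets has cardinality less than $\kappa$ and the union of fewer than $\kappa$ right solution sets has cardinality less than $\kappa$. $e$ is idempotent if $e+e=e$. $A\subseteq S$ is an IP set if there is a sequence $\langle x_n\rangle_{n=1}^\infty$ in $S$ such that every finite sum $\sum_{n\in H}x_n$ (in increasing order of indices, $H$ a nonempty finite subset of $\mathbb{N}$) lies in $A$. *)

(* Defs.v *)
From HB Require Import structures.
From mathcomp Require Import all_boot all_order.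
From mathcomp Require Import boolp classical_sets functions cardinality.
Set Implicit Arguments. Unset Strict Implicit. Unset Printing Implicit Defensive.
Local Open Scope classical_set_scope.
Local Open Scope card_scope.

Definition card_lt T U (A : set T) (B : set U) : Prop := A #<= B /\ ~ (B #<= A).

Definition left_sol (S : Type) (op : S -> S -> S) (a b : S) : set S :=
  [set x | op a x = b].
Definition right_sol (S : Type) (op : S -> S -> S) (a b : S) : set S :=
  [set x | op x a = b].

(* A family of fewer than kappa = |S| solution sets is given by a set P of
   parameter pairs (a,b) with |P| < |S|; its union is the union over P. *)
Definition very_weakly_cancellative (S : Type) (op : S -> S -> S) : Prop :=
  forall P : set (S * S), card_lt P [set: S] ->
    card_lt (\bigcup_(p in P) left_sol op p.1 p.2) [set: S] /\
    card_lt (\bigcup_(p in P) right_sol op p.1 p.2) [set: S].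

Definition idempotent_elt (S : Type) (op : S -> S -> S) (e : S) : Prop :=
  op e e = e.

Fixpoint fsum (S : Type) (op : S -> S -> S) (x : nat -> S) (n : nat)
  (H : seq nat) : S :=
  match H with
  | [::] => x n
  | m :: H' => op (x n) (fsum op x m H')
  end.

(* H is represented as a strictly increasing list n :: H'. *)
Definition IP_set (S : Type) (op : S -> S -> S) (A : set S) : Prop :=
  exists x : nat -> S, forall (n : nat) (H : seq nat),
    sorted ltn (n :: H) -> A (fsum op x n H).

(* Main.v *)
Require Import Defs.
From mathcomp Require Import all_boot all_order.
From mathcomp Require Import boolp classical_sets functions cardinality wochoice.
From Stdlib Require Import ClassicalEpsilon.
Set Implicit Arguments. Unset Strict Implicit. Unset Printing Implicit Defensive.
Local Open Scope classical_set_scope.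
Local Open Scope card_scope.

Lemma countableU' T (A B : set T) : countable A -> countable B -> countable (A `|` B).
Proof.
move=> cA cB.
have -> : A `|` B = \bigcup_(b in [set: bool]) (if b then A else B).
  apply/seteqP; split=> x.
    by case=> h; [exists true | exists false].
  by case=> -[] _ h; [left | right].
by apply: bigcup_countable => // -[].
Qed.

Definition T0 := (nat -> bool).
Definition RR : rel T0 := proj1_sig (well_ordering_principle T0).
Lemma RRwo : well_order RR.
Proof. exact: (proj2_sig (well_ordering_principle T0)). Qed.

Lemma R_min (Q : T0 -> Prop) : (exists x, Q x) ->
  exists m, Q m /\ forall y, Q y -> RR m y.
Proof.
move=> [x Qx].
have [|z [[zA lb] _]] := RRwo (A := [pred t | `[< Q t >]]).
  by exists x; rewrite inE.
exists z; split; first by move: zA; rewrite inE.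
by move=> y Qy; apply: lb; rewrite inE.
Qed.

Lemma woc : wo_chain RR predT.
Proof. by move=> A _; apply: RRwo. Qed.

Lemma R_tot x y : RR x y || RR y x.
Proof. exact: (wo_chainW woc). Qed.
Lemma R_refl x : RR x x.
Proof. exact: (wo_chain_reflexive woc). Qed.
Lemma R_anti x y : RR x y -> RR y x -> x = y.
Proof. by move=> h1 h2; apply: (wo_chain_antisymmetric woc) => //; rewrite h1 h2. Qed.
Lemma R_trans x y z : RR x y -> RR y z -> RR x z.
Proof.
move=> hxy hyz.
have [m [Qm lb]] := @R_min (fun t => t = x \/ t = y \/ t = z) (ex_intro _ x (or_introl erefl)).
case: Qm => [e|[e|e]]; subst m.
- by apply: lb; right; right.
- have -> : x = y by apply: R_anti => //; apply: lb; left.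
  by [].
- have e : y = z by apply: R_anti => //; apply: lb; right; left.
  by rewrite -e.
Qed.

Lemma cantor : ~ countable [set: T0].
Proof.
move/countable_injP => [f finj].
pose g (n : nat) : T0 := match pselect (exists t, f t = n) with
  | left h => proj1_sig (cid h) | right _ => fun _ => false end.
pose d : T0 := fun k => ~~ g k k.
have : g (f d) = d.
  rewrite /g; case: pselect => [h|h]; last by exfalso; apply: h; exists d.
  case: cid => t /= ht; apply: finj => //; by rewrite inE.
move=> e; have h : d (f d) = ~~ g (f d) (f d) by [].
by rewrite e in h; case: (d (f d)) h.
Qed.

Definition W (t : T0) : bool := `[< countable [set z | RR z t] >].
Definition X := {t : T0 | W t}.

Lemma X_unc : ~ countable [set: X].
Proof.
move=> cX.
have cV : countable (val @` [set: X]).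
  exact: sub_countable (card_image_le _ _) cX.
case: (pselect (exists t, ~ W t)) => [hex|hall].
  have [m [nWm lb]] := R_min hex.
  apply: nWm; apply/asboolP.
  apply: (sub_countable (subset_card_le _)) (countableU' cV (countable1 m)).
  move=> z /= hz; case: (pselect (z = m)) => [->|nzm]; first by right.
  left; case: (pselect (W z)) => [Wz|nWz]; first by exists (exist _ z Wz).
  by exfalso; apply: nzm; apply: R_anti => //; apply: lb.
apply: cantor; apply: (sub_countable (subset_card_le _)) cV.
move=> z _; have Wz : W z by apply: contrapT => h; apply: hall; exists z.
by exists (exist _ z Wz).
Qed.
Definition ltX (x y : X) : bool := RR (val x) (val y) && (val x != val y).

Lemma ltX_irr x : ltX x x = false.
Proof. by rewrite /ltX eqxx andbF. Qed.

Lemma ltX_trans x y z : ltX x y -> ltX y z -> ltX x z.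
Proof.
rewrite /ltX => /andP[h1 n1] /andP[h2 n2]; rewrite (R_trans h1 h2) /=.
apply/eqP => e; have e' : val x = val z := e; rewrite e' in h1.
by move/eqP: n2; apply; apply: R_anti.
Qed.

Lemma ltX_asym x y : ltX x y -> ltX y x = false.
Proof. by move=> h; apply/negP => h'; have := ltX_trans h h'; rewrite ltX_irr. Qed.

Lemma ltX_tri x y : [\/ ltX x y, x = y | ltX y x].
Proof.
case: (eqVneq x y) => [->|nxy]; first by apply: Or32.
have nv : val x != val y by apply: contra_neq nxy => /val_inj.
case/orP: (R_tot (val x) (val y)) => h.
  by apply: Or31; rewrite /ltX h nv.
by apply: Or33; rewrite /ltX h eq_sym nv.
Qed.

Definition S := (X * nat)%type.

Definition op (a b : S) : S :=
  if ltX a.1 b.1 then b else if ltX b.1 a.1 then a else (a.1, (a.2 + b.2).+1).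

Ltac closure := repeat match goal with
 | h1 : is_true (ltX ?a ?b), h2 : is_true (ltX ?b ?c) |- _ =>
   lazymatch goal with | _ : is_true (ltX a c) |- _ => fail | _ => have := ltX_trans h1 h2; intro end end.

Ltac rwall := repeat (match goal with
  | |- context [ltX ?a ?a] => rewrite ltX_irr /=
  | h : is_true (ltX ?a ?b) |- context [ltX ?a ?b] => rewrite h /=
  | h : is_true (ltX ?a ?b) |- context [ltX ?b ?a] => rewrite (ltX_asym h) /=
  end).

Lemma op_assoc : associative op.
Proof.
move=> [x n] [y m] [z k]; rewrite /op /=.
case: (ltX_tri x y) => [hxy|exy|hyx];
case: (ltX_tri y z) => [hyz|eyz|hzy];
case: (ltX_tri x z) => [hxz|exz|hzx]; subst; closure;
try (match goal with h : is_true (ltX ?a ?a) |- _ => by rewrite ltX_irr in h end);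
rwall; rewrite ?addnS ?addSn ?addnA //.
Qed.

Lemma op_noidem (e : S) : op e e <> e.
Proof.
case: e => x n; rewrite /op /= ltX_irr => -[] /eqP.
by rewrite gtn_eqF // ltnS leq_addr.
Qed.
Lemma op_distinct a b : a.1 <> b.1 -> op a b = a \/ op a b = b.
Proof.
move=> nab; rewrite /op; case: (ltX_tri a.1 b.1) => [h|e|h].
- by rewrite h; right.
- by [].
- by rewrite h (ltX_asym h); left.
Qed.

Lemma fsum_in (x : nat -> S) (hx : injective (fun i => (x i).1)) H n :
  sorted ltn (n :: H) -> exists k, k \in n :: H /\ fsum op x n H = x k.
Proof.
elim: H n => [|m H IH] n /=; first by move=> _; exists n; rewrite mem_seq1.
move=> /andP[hnm hp].
have [k [kin ->]] := IH m hp.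
have hall : all (ltn n) (m :: H) by apply: (order_path_min ltn_trans); rewrite /= hnm hp.
have nk : n <> k.
  move=> e; subst k; move/allP: hall => /(_ _ kin) /=; by rewrite ltnn.
have [->|->] := @op_distinct (x n) (x k) (fun e => nk (hx _ _ e)).
  by exists n; rewrite mem_head.
by exists k; rewrite in_cons kin orbT.
Qed.

Lemma unc_seq (A : set S) : ~ countable A ->
  exists x : nat -> S, (forall i, A (x i)) /\ injective (fun i => (x i).1).
Proof.
move=> ncA.
have infC : infinite_set (fst @` A).
  move=> /finite_set_countable cC; apply: ncA.
  apply: (sub_countable (subset_card_le _)) (countableX cC (countableP [set: nat])).
  by move=> [a i] Aa; split => //; exists (a, i).
move/infiniteP/card_leP: infC => -[f].
pose g n := val (f (to_setT n)).
pose x n := proj1_sig (cid2 (set_valP (f (to_setT n)))).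
exists x; split.
  by move=> i; rewrite /x; case: cid2.
move=> i j; rewrite /x; case: cid2 => a _ /= ea; case: cid2 => b _ /= eb.
rewrite ea eb => /val_inj /(inj (f := f)).
by move=> /(_ (mem_set I) (mem_set I)) /(congr1 val).
Qed.

Lemma ip_all (A : set S) : ~ countable A -> IP_set op A.
Proof.
move=> /unc_seq [x [Ax hx]]; exists x => n H hs.
by have [k [_ ->]] := fsum_in hx hs.
Qed.
Lemma inj_unc (Z Y : Type) (L : Z -> Z -> bool) (wfL : well_founded (fun a b => L a b))
  (totL : forall a b, a <> b -> L a b \/ L b a)
  (segc : forall a, countable [set b | L b a])
  (P : set Y) : ~ countable P -> [set: Z] #<= P.
Proof.
move=> ncP.
have [y0 _] : exists y, P y.
  apply: contrapT => h; apply: ncP.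
  have -> : P = set0 by apply/seteqP; split => y Py //; exfalso; apply: h; exists y.
  exact: countable0.
pose F (a : Z) (rec : forall b, L b a -> Y) : Y :=
  epsilon (inhabits y0) (fun y => P y /\ forall b (h : L b a), rec b h <> y).
pose g := Fix wfL (fun _ => Y) F.
have geq a : g a = F a (fun b _ => g b).
  rewrite /g Fix_eq // => z f1 f2 hf.
  have -> : f1 = f2 by apply: functional_extensionality_dep => b;
    apply: functional_extensionality_dep => p; apply: hf.
  by [].
have gP a : P (g a) /\ forall b, L b a -> g b <> g a.
  have := geq a; rewrite /F => ->.
  set Q := (fun y => _).
  have : Q (epsilon (inhabits y0) Q).
    apply: epsilon_spec; apply: contrapT => hne; apply: ncP.
    apply: (sub_countable (subset_card_le _)) (sub_countable (card_image_le g _) (segc a)).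
    move=> y Py; apply: contrapT => hn; apply: hne; exists y; split => // b hb e; apply: hn.
    by exists b.
  move=> [h1 h2]; split => // b hb; exact: h2.
have [h] : $|{injfun [set: Z] >-> P}|.
  apply/injfunPex; exists g; first by move=> a _; case: (gP a).
  move=> a b _ _ e; apply: contrapT => nab.
  case: (totL _ _ nab) => h; [exact: (proj2 (gP b)) a h e | exact: (proj2 (gP a)) b h (esym e)].
exact: inj_card_le h.
Qed.

Lemma wf_ltX : well_founded (fun a b => ltX a b).
Proof.
move=> x; apply: contrapT => nA.
have ex0 : exists t, exists h : W t, ~ Acc (fun a b => ltX a b) (exist _ t h).
  by case: x nA => t ht nA; exists t, ht.
have [m [[hm nAm] lb]] := R_min ex0.
apply: nAm; constructor => -[t ht] hy; apply: contrapT => nAy.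
have h1 := lb t (ex_intro _ ht nAy).
move: hy; rewrite /ltX /= => /andP[h2 /eqP]; apply; exact: R_anti.
Qed.

Definition lexS (a b : S) : bool := ltX a.1 b.1 || (a.1 == b.1) && (a.2 < b.2).

Lemma wf_lexS : well_founded (fun a b => lexS a b).
Proof.
move=> [x n]; elim/(well_founded_induction wf_ltX): x n => x IHx n.
elim/ltn_ind: n => n IHn.
constructor => -[y m] /orP[h| /andP[/eqP /= e hm]].
- exact: IHx.
- by subst y; apply: IHn.
Qed.

Lemma tot_lexS a b : a <> b -> lexS a b \/ lexS b a.
Proof.
case: a b => [x n] [y m] nab; rewrite /lexS /=.
case: (ltX_tri x y) => [h|e|h].
- by left; rewrite h.
- subst y; rewrite eqxx ltX_irr /=; case: (ltngtP n m) => [h|h|e]; [left|right|] => //.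
  by subst m.
- by right; rewrite h.
Qed.

Lemma notlt x y : ~~ ltX y x -> RR (val x) (val y).
Proof.
case: (ltX_tri x y) => [/andP[] //|->|h]; first by rewrite R_refl.
by rewrite h.
Qed.

Definition vX (y : X) : T0 := val y.
Lemma vX_inj : injective vX.
Proof. move=> a b; exact: val_inj. Qed.

Lemma segX (x : X) : countable [set y : X | RR (val y) (val x)].
Proof.
set B := [set y : X | _].
have [_ hB] := (card_eqPle _ _).1 (@inj_card_eq _ _ B vX (in2W vX_inj)).
apply: (sub_countable hB); apply: (sub_countable (subset_card_le _)) (asboolW (valP x)).
by move=> z [y By <-].
Qed.

Lemma seg_lexS a : countable [set b | lexS b a].
Proof.
apply: (sub_countable (subset_card_le _)) (countableX (segX a.1) (countableP [set: nat])).
move=> [y m] /orP[h|/andP[/eqP /= e _]]; split => //=.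
  by case/andP: h.
by rewrite e R_refl.
Qed.

Lemma S_unc : ~ countable [set: S].
Proof.
move=> cS; apply: X_unc.
apply: (sub_countable (subset_card_le _)) (sub_countable (card_image_le fst _) cS).
by move=> x _; exists (x, 0).
Qed.

Lemma vwc : very_weakly_cancellative op.
Proof.
move=> P [_ nSP].
have cP : countable P.
  apply: contrapT => ncP; apply: nSP; exact: inj_unc wf_lexS tot_lexS seg_lexS _ ncP.
have hU (U : set S) : countable U -> card_lt U [set: S].
  move=> cU; split; first exact: card_leT.
  by move=> hSU; apply: S_unc; exact: card_le_trans hSU cU.
split; apply: hU; apply: bigcup_countable => //= -[a b] _ /=;
  apply: (sub_countable (subset_card_le _)) (countableU' (countable1 b)
     (countableX (segX a.1) (countableP [set: nat]))).
- move=> [x n]; rewrite /left_sol /= => e.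
  case hl: (ltX a.1 x) .
    by left; rewrite -e /op /= hl.
  by right; split => //=; apply: notlt; rewrite hl.
- move=> [x n]; rewrite /right_sol /= => e.
  case hl: (ltX a.1 x).
    by left; rewrite -e /op /= hl (ltX_asym hl).
  by right; split => //=; apply: notlt; rewrite hl.
Qed.

Theorem theorem2p7 :
  exists (S : Type) (op : S -> S -> S),
    associative op /\
    ~ countable [set: S] /\
    very_weakly_cancellative op /\
    (forall e : S, ~ idempotent_elt op e) /\
    (forall A : set S, ~ countable A -> IP_set op A).
Proof.
exists S, op; split; first exact: op_assoc.
split; first exact: S_unc.
split; first exact: vwc.
split; first by move=> e; apply: op_noidem.
exact: ip_all.
Qed.
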